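(* Let ${\mathbb E}$, ${\mathbb W}$ be finite-dimensional Euclidean spaces, ${\mathcal A}:{\mathbb E}\to{\mathbb W}$ linear, $L={\mathcal A}^*({\mathbb W})\subseteq{\mathbb E}$, $\mathcal{K}\subseteq{\mathbb E}$ a convex cone and $C\in{\mathbb E}$, and suppose ${\mathcal F}=\{Z\in\mathcal{K}: Z=C-{\mathcal A}^*y \text{ for some } y\in{\mathbb W}\}\ne\emptyset$. Let $P$ denote the orthogonal projection of ${\mathbb E}$ onto $L^\perp$ (so that $P(\mathcal{K})$ is the quotient cone $\mathcal{K}/L$ and $P(C)$ represents $C/L$). Then the singularity degree of the system ${\mathcal F}$ over $\mathcal{K}$ equals the singularity degree of $\operatorname{face}(P(C),P(\mathcal{K}))$ over $P(\mathcal{K})$. Moreover, if ${\mathcal M}:{\mathbb E}\to{\mathbb F}$ is a surjective linear map with $\operatorname{Null}({\mathcal M})=L$ and $b={\mathcal M}(C)$, then ${\mathcal M}$ induces an isomorphism of the cones $\mathcal{K}/L$ and ${\mathcal M}(\mathcal{K})$, and this singularity degree also equals the singularity degree of the system $\{X\in\mathcal{K}:{\mathcal M}(X)=b\}$.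
   Context: Singularity degree of a system $\{X\in\mathcal{K}:{\mathcal M}(X)=b\}$: the minimum number $k$ of facial reduction steps ${\mathcal F}_0=\mathcal{K}$, ${\mathcal F}_{i+1}={\mathcal F}_i\cap({\mathcal M}^*v_i)^\perp$ with ${\mathcal M}^*v_i\in{\mathcal F}_i^*\setminus{\mathcal F}_i^\perp$, $\langle v_i,b\rangle=0$, reaching the smallest face of $\mathcal{K}$ containing the feasible set. For the nullspace-form system $\{Z\in\mathcal{K}:Z\in C+L\}$ the steps use exposing vectors $W_i\in{\mathcal F}_i^*\setminus{\mathcal F}_i^\perp$ with $W_i\in L^\perp$ and $\langle W_i,C\rangle=0$, reaching the smallest face of $\mathcal{K}$ containing the feasible set. Singularity degree of a face $G_t$ of a cone $G$: minimum number $d$ of steps $G_0=G$, $G_{i+1}=G_i\cap d_i^\perp$, $d_i\in G_i^*\setminus G_i^\perp$, $d_i\perp G_t$, with $G_d=G_t$. $\operatorname{face}(x,G)$ is the smallest face of $G$ containing $x$. *)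

(* Defs.v *)
(* Euclidean spaces E, W, F are modelled as row-vector spaces
   'rV[R]_n with the standard inner product (every finite-dimensional Euclidean
   space is isometric to such a space); linear maps are matrices acting on the
   right (x |-> x *m A), adjoints are given by the transpose. *)
From HB Require Import structures.
From mathcomp Require Import all_boot all_order all_algebra.
From mathcomp Require Import reals.
Set Implicit Arguments. Unset Strict Implicit. Unset Printing Implicit Defensive.
Import Order.TTheory GRing.Theory Num.Theory.
Local Open Scope ring_scope.

Section FR.
Variable R : realType.

Definition dot (n : nat) (x y : 'rV[R]_n) : R := \sum_(i < n) x ord0 i * y ord0 i.

Definition seteq (n : nat) (S T : 'rV[R]_n -> Prop) : Prop := forall x, S x <-> T x.

Definition subset_of (n : nat) (S T : 'rV[R]_n -> Prop) : Prop := forall x, S x -> T x.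

Definition img (n p : nat) (f : 'rV[R]_n -> 'rV[R]_p) (S : 'rV[R]_n -> Prop)
  : 'rV[R]_p -> Prop := fun y => exists x, S x /\ y = f x.

Definition convex_cone (n : nat) (K : 'rV[R]_n -> Prop) : Prop :=
  K 0 /\ (forall x y, K x -> K y -> K (x + y)) /\
  (forall (t : R) x, 0 <= t -> K x -> K (t *: x)).

Definition is_face (n : nat) (K F : 'rV[R]_n -> Prop) : Prop :=
  subset_of F K /\ convex_cone F /\
  (forall x y, K x -> K y -> F (x + y) -> F x /\ F y).

Definition min_face (n : nat) (K S : 'rV[R]_n -> Prop) : 'rV[R]_n -> Prop :=
  fun x => K x /\ forall F, is_face K F -> subset_of S F -> F x.

Definition face_pt (n : nat) (x : 'rV[R]_n) (K : 'rV[R]_n -> Prop) :=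
  min_face K (fun y => y = x).

Definition dual (n : nat) (K : 'rV[R]_n -> Prop) : 'rV[R]_n -> Prop :=
  fun y => forall x, K x -> 0 <= dot y x.
Definition perp (n : nat) (K : 'rV[R]_n -> Prop) : 'rV[R]_n -> Prop :=
  fun y => forall x, K x -> dot y x = 0.

Definition cut (n : nat) (K : 'rV[R]_n -> Prop) (w : 'rV[R]_n) : 'rV[R]_n -> Prop :=
  fun x => K x /\ dot w x = 0.

(* The steps are given by parameters v_i in some
   space 'rV_p; the exposing vector is g v_i, and ok v_i is the side condition
   (e.g. <v_i, b> = 0). *)
Fixpoint fr_valid (n p : nat) (g : 'rV[R]_p -> 'rV[R]_n) (ok : 'rV[R]_p -> Prop)
  (K : 'rV[R]_n -> Prop) (vs : seq 'rV[R]_p) : Prop :=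
  match vs with
  | [::] => True
  | v :: vs' => dual K (g v) /\ ~ perp K (g v) /\ ok v /\
                fr_valid g ok (cut K (g v)) vs'
  end.

Fixpoint fr_last (n p : nat) (g : 'rV[R]_p -> 'rV[R]_n)
  (K : 'rV[R]_n -> Prop) (vs : seq 'rV[R]_p) : 'rV[R]_n -> Prop :=
  match vs with
  | [::] => K
  | v :: vs' => fr_last g (cut K (g v)) vs'
  end.

Definition is_sing_deg (n p : nat) (g : 'rV[R]_p -> 'rV[R]_n) (ok : 'rV[R]_p -> Prop)
  (K target : 'rV[R]_n -> Prop) (d : nat) : Prop :=
  (exists vs, size vs = d /\ fr_valid g ok K vs /\ seteq (fr_last g K vs) target) /\
  (forall vs, fr_valid g ok K vs -> seteq (fr_last g K vs) target -> (d <= size vs)%N).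

(* L = A^*(W) = range of y |-> y *m A^T, and its orthogonal complement *)
Definition Lsp (n m : nat) (A : 'M[R]_(n, m)) : 'rV[R]_n -> Prop :=
  fun x => exists y : 'rV[R]_m, x = y *m A^T.
Definition Lperp (n m : nat) (A : 'M[R]_(n, m)) : 'rV[R]_n -> Prop :=
  perp (Lsp A).

Definition sd_null (n m : nat) (A : 'M[R]_(n, m)) (K : 'rV[R]_n -> Prop)
  (C : 'rV[R]_n) (d : nat) : Prop :=
  is_sing_deg id (fun W => Lperp A W /\ dot W C = 0) K
    (min_face K (fun Z => K Z /\ exists y : 'rV[R]_m, Z = C - y *m A^T)) d.

Definition sd_sys (n k : nat) (M : 'M[R]_(n, k)) (K : 'rV[R]_n -> Prop)
  (b : 'rV[R]_k) (d : nat) : Prop :=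
  is_sing_deg (fun v : 'rV[R]_k => v *m M^T) (fun v => dot v b = 0) K
    (min_face K (fun X => K X /\ X *m M = b)) d.

(* singularity degree of the face Gt of the cone G, where G lives in the
   subspace L^perp (the exposing vectors are taken in L^perp, i.e. in the
   quotient space E/L identified with L^perp) *)
Definition sd_face (n m : nat) (A : 'M[R]_(n, m)) (G Gt : 'rV[R]_n -> Prop)
  (d : nat) : Prop :=
  is_sing_deg id (fun D => Lperp A D /\ perp Gt D) G Gt d.

End FR.

(* Main.v *)
Require Import Defs.
From HB Require Import structures.
From mathcomp Require Import all_boot all_order all_algebra.
From mathcomp Require Import reals.
From mathcomp Require Import ring.
From Stdlib Require Import FunctionalExtensionality PropExtensionality.
Import Order.TTheory GRing.Theory Num.Theory.
Local Open Scope ring_scope.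
Ltac mxring := apply/rowP => ?; rewrite !mxE; ring.

Set Implicit Arguments. Unset Strict Implicit. Unset Printing Implicit Defensive.



Section Dot.
Variable R : realType.

Lemma dotE n (x y : 'rV[R]_n) : dot x y = (x *m y^T) ord0 ord0.
Proof. rewrite /dot !mxE; apply: eq_bigr => i _; by rewrite mxE. Qed.

Lemma dotC n (x y : 'rV[R]_n) : dot x y = dot y x.
Proof. by rewrite /dot; apply: eq_bigr => i _; rewrite mulrC. Qed.

Lemma dotDr n (x y z : 'rV[R]_n) : dot x (y + z) = dot x y + dot x z.
Proof. by rewrite /dot -big_split; apply: eq_bigr => i _; rewrite mxE mulrDr. Qed.

Lemma dotZr n (x y : 'rV[R]_n) t : dot x (t *: y) = t * dot x y.
Proof. by rewrite /dot mulr_sumr; apply: eq_bigr => i _; rewrite mxE mulrCA. Qed.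

Lemma dotNr n (x y : 'rV[R]_n) : dot x (- y) = - dot x y.
Proof. by rewrite -scaleN1r dotZr mulN1r. Qed.

Lemma dotBr n (x y z : 'rV[R]_n) : dot x (y - z) = dot x y - dot x z.
Proof. by rewrite dotDr dotNr. Qed.

Lemma dot0r n (x : 'rV[R]_n) : dot x 0 = 0.
Proof. by rewrite -(scale0r (0 : 'rV[R]_n)) dotZr mul0r. Qed.

Lemma dotDl n (x y z : 'rV[R]_n) : dot (y + z) x = dot y x + dot z x.
Proof. by rewrite !(dotC _ x) dotDr. Qed.
Lemma dotZl n (x y : 'rV[R]_n) t : dot (t *: y) x = t * dot y x.
Proof. by rewrite !(dotC _ x) dotZr. Qed.
Lemma dotNl n (x y : 'rV[R]_n) : dot (- y) x = - dot y x.
Proof. by rewrite !(dotC _ x) dotNr. Qed.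

Lemma dot_self0 n (v : 'rV[R]_n) : dot v v = 0 -> v = 0.
Proof.
move=> h; apply/rowP => i; rewrite mxE.
have := @psumr_eq0P R _ predT (fun i => v ord0 i * v ord0 i).
move=> /(_ (fun i _ => (sqr_ge0 (v ord0 i)))) /(_ h i isT).
by move/eqP; rewrite mulf_eq0 orbb => /eqP.
Qed.

Lemma dot_mul n k (u : 'rV[R]_n) (B : 'M[R]_(k, n)) (x : 'rV[R]_k) :
  dot (u *m B^T) x = dot u (x *m B).
Proof.
rewrite dotC !dotE.
have -> : u *m (x *m B)^T = (x *m B *m u^T)^T by rewrite !trmx_mul trmxK.
by rewrite [in RHS]mxE trmx_mul trmxK mulmxA.
Qed.

End Dot.



Section Proj.
Variables (R : realType) (n m : nat) (A : 'M[R]_(n, m)).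

Lemma LspD x y : Lsp A x -> Lsp A y -> Lsp A (x + y).
Proof. by move=> [a ->] [b ->]; exists (a + b); rewrite mulmxDl. Qed.
Lemma LspN x : Lsp A x -> Lsp A (- x).
Proof. by move=> [a ->]; exists (- a); rewrite mulNmx. Qed.
Lemma LspB x y : Lsp A x -> Lsp A y -> Lsp A (x - y).
Proof. by move=> hx hy; apply: LspD => //; apply: LspN. Qed.
Lemma LspZ t x : Lsp A x -> Lsp A (t *: x).
Proof. by move=> [a ->]; exists (t *: a); rewrite scalemxAl. Qed.
Lemma Lsp0 : Lsp A 0.
Proof. by exists 0; rewrite mul0mx. Qed.

Lemma LperpD x y : Lperp A x -> Lperp A y -> Lperp A (x + y).
Proof. by move=> hx hy z hz; rewrite dotDl hx // hy // addr0. Qed.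
Lemma LperpN x : Lperp A x -> Lperp A (- x).
Proof. by move=> hx z hz; rewrite dotNl hx // oppr0. Qed.
Lemma LperpB x y : Lperp A x -> Lperp A y -> Lperp A (x - y).
Proof. by move=> hx hy; apply: LperpD => //; apply: LperpN. Qed.
Lemma LperpZ t x : Lperp A x -> Lperp A (t *: x).
Proof. by move=> hx z hz; rewrite dotZl hx // mulr0. Qed.
Lemma Lperp0 : Lperp A 0.
Proof. by move=> z _; rewrite -(scale0r (0 : 'rV[R]_n)) dotZl mul0r. Qed.

Lemma LLperp0 x : Lsp A x -> Lperp A x -> x = 0.
Proof. by move=> h1 h2; apply: dot_self0; apply: h2. Qed.

Variable P : 'rV[R]_n -> 'rV[R]_n.
Hypothesis HP : forall x, Lperp A (P x) /\ Lsp A (x - P x).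

Lemma Pchar x u : Lperp A u -> Lsp A (x - u) -> P x = u.
Proof.
move=> hu hxu; apply/eqP; rewrite -subr_eq0; apply/eqP.
apply: LLperp0; last by apply: LperpB => //; case: (HP x).
have -> : P x - u = (x - u) - (x - P x) by mxring.
by apply: LspB => //; case: (HP x).
Qed.

Lemma PD x y : P (x + y) = P x + P y.
Proof.
apply: Pchar; first by apply: LperpD; [case: (HP x)|case: (HP y)].
have -> : x + y - (P x + P y) = (x - P x) + (y - P y).
  by mxring.
by apply: LspD; [case: (HP x)|case: (HP y)].
Qed.

Lemma PZ t x : P (t *: x) = t *: P x.
Proof.
apply: Pchar; first by apply: LperpZ; case: (HP x).
by rewrite -scalerBr; apply: LspZ; case: (HP x).
Qed.

Lemma P0 : P 0 = 0.
Proof. by apply: Pchar; [apply: Lperp0 | rewrite subr0; apply: Lsp0]. Qed.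

Lemma Peq x z : Lsp A (x - z) -> P x = P z.
Proof.
move=> h; apply: Pchar; first by case: (HP z).
have -> : x - P z = (x - z) + (z - P z) by mxring.
by apply: LspD => //; case: (HP z).
Qed.

Lemma Peq_inv x z : P x = P z -> Lsp A (x - z).
Proof.
move=> e.
have -> : x - z = (x - P x) - (z - P z) by rewrite e; mxring.
by apply: LspB; [case: (HP x)|case: (HP z)].
Qed.

Lemma dotP W x : Lperp A W -> dot W (P x) = dot W x.
Proof.
move=> hW; apply/eqP; rewrite -subr_eq0 -dotBr; apply/eqP.
have -> : P x - x = - (x - P x) by mxring.
by apply: hW; apply: LspN; case: (HP x).
Qed.

End Proj.




Section Face.
Variables (R : realType) (n : nat).
Implicit Types (K G F S : 'rV[R]_n -> Prop).

Lemma face_refl K : convex_cone K -> is_face K K.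
Proof. by move=> hK; split=> //. Qed.

Lemma face_cut K G W : is_face K G -> dual G W -> is_face K (cut G W).
Proof.
move=> [hGK [[hG0 [hGD hGZ]] hGf]] hW; split; first by move=> x [/hGK].
split; first split.
- by split => //; rewrite dot0r.
- split.
  move=> x y [gx wx] [gy wy]; split; first exact: hGD.
  by rewrite dotDr wx wy addr0.
  by move=> t x ht [gx wx]; split; [exact: hGZ | rewrite dotZr wx mulr0].
- move=> x y kx ky [gxy wxy]; have [gx gy] := hGf _ _ kx ky gxy.
have hx := hW _ gx; have hy := hW _ gy.
rewrite dotDr in wxy.
have ex : dot W x = 0.
  by apply/eqP; rewrite eq_le hx andbT -wxy lerDl.
by split; split => //; move: wxy; rewrite ex add0r.
Qed.

Lemma min_face_face K S : convex_cone K -> is_face K (min_face K S).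
Proof.
move=> [hK0 [hKD hKZ]]; split; first by move=> x [].
split; first split.
- by split=> // F [_ [[]]].
- split.
  + move=> x y [kx fx] [ky fy]; split; first exact: hKD.
    by move=> F hF hS; have [_ [[_ [hFD _]] _]] := hF; apply: hFD; [exact: fx|exact: fy].
  + move=> t x ht [kx fx]; split; first exact: hKZ.
    by move=> F hF hS; have [_ [[_ [_ hFZ]] _]] := hF; apply: hFZ => //; exact: fx.
- move=> x y kx ky [kxy fxy]; split; split => // F hF hS;
  by case: hF => h1 [h2 h3]; have [] := h3 _ _ kx ky (fxy F (conj h1 (conj h2 h3)) hS).
Qed.

Lemma min_face_sub K S F : is_face K F -> subset_of S F -> subset_of (min_face K S) F.
Proof. by move=> hF hS x [_ h]; apply: h. Qed.

Lemma face_pt_self K x : K x -> face_pt x K x.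
Proof. by move=> kx; split => // F _ h; apply: h. Qed.

Lemma face_T K c : convex_cone K -> K c ->
  is_face K (fun x => K x /\ exists t, 0 <= t /\ K (t *: c - x)).
Proof.
move=> [hK0 [hKD hKZ]] hc; split; first by move=> x [].
split; first split.
- split => //; exists 0; rewrite scale0r subr0; split => //.
- split.
  + move=> x y [kx [t1 [ht1 h1]]] [ky [t2 [ht2 h2]]]; split; first exact: hKD.
    exists (t1 + t2); split; first exact: addr_ge0.
    have -> : (t1 + t2) *: c - (x + y) = (t1 *: c - x) + (t2 *: c - y) by mxring.
    exact: hKD.
  + move=> s x hs [kx [t [ht h]]]; split; first exact: hKZ.
    exists (s * t); split; first exact: mulr_ge0.
    have -> : (s * t) *: c - s *: x = s *: (t *: c - x) by mxring.
    exact: hKZ.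
- move=> x y kx ky [_ [t [ht h]]]; split; split => //.
  + exists t; split => //.
    have -> : t *: c - x = (t *: c - (x + y)) + y by mxring.
    exact: hKD.
  + exists t; split => //.
    have -> : t *: c - y = (t *: c - (x + y)) + x by mxring.
    exact: hKD.
Qed.

End Face.




Lemma fr_last_map (R : realType) n p (g : 'rV[R]_p -> 'rV[R]_n) K vs :
  fr_last g K vs = fr_last id K (map g vs).
Proof. by elim: vs K => [|v vs IH] K //=; rewrite IH. Qed.

Lemma fr_valid_map (R : realType) n p (g : 'rV[R]_p -> 'rV[R]_n) ok ok' K vs :
  (forall v, ok v <-> ok' (g v)) ->
  fr_valid g ok K vs <-> fr_valid id ok' K (map g vs).
Proof.
move=> hok; elim: vs K => [|v vs IH] K //=.
by rewrite (IH (cut K (g v))) (hok v).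
Qed.

Lemma predext (T : Type) (S1 S2 : T -> Prop) : (forall x, S1 x <-> S2 x) -> S1 = S2.
Proof. by move=> h; apply: functional_extensionality => x; apply: propositional_extensionality. Qed.

Section Part1.
Variables (R : realType) (n m : nat) (A : 'M[R]_(n, m)).
Variables (K : 'rV[R]_n -> Prop) (C : 'rV[R]_n) (P : 'rV[R]_n -> 'rV[R]_n).
Hypothesis HK : convex_cone K.
Hypothesis Hfeas : exists Z, K Z /\ exists y : 'rV[R]_m, Z = C - y *m A^T.
Hypothesis HP : forall x, Lperp A (P x) /\ Lsp A (x - P x).

Let PK := img P K.
Let G := face_pt (P C) PK.
Let Feas := fun Z => K Z /\ exists y : 'rV[R]_m, Z = C - y *m A^T.
Let okN := fun W => Lperp A W /\ dot W C = 0.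
Let okF := fun D => Lperp A D /\ perp G D.

Lemma PK_cone : convex_cone PK.
Proof.
case: HK => [h0 [hD hZ]]; split; first by exists 0; rewrite (P0 HP).
split.
- by move=> _ _ [x [kx ->]] [y [ky ->]]; exists (x + y); rewrite (PD HP); split => //; apply: hD.
- by move=> t _ ht [x [kx ->]]; exists (t *: x); rewrite (PZ HP); split => //; apply: hZ.
Qed.

Lemma Feas_P Z : Feas Z -> P Z = P C.
Proof.
move=> [_ [y ->]]; apply: (Peq HP).
have -> : C - y *m A^T - C = (- y) *m A^T by rewrite mulNmx; mxring.
by exists (- y).
Qed.

Lemma PC_PK : PK (P C).
Proof. by case: Hfeas => Z hZ; exists Z; split; [case: hZ | rewrite Feas_P]. Qed.

Lemma G_PC : G (P C).
Proof. exact: face_pt_self PC_PK. Qed.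

Lemma img_cut K' W : Lperp A W -> img P (cut K' W) = cut (img P K') W.
Proof.
move=> hW; apply: predext => y; split.
- by move=> [x [[kx wx] ->]]; split; [exists x | rewrite (dotP HP)].
- by move=> [[x [kx ->]] wx]; exists x; split => //; split => //; rewrite -(dotP HP).
Qed.

Lemma dual_img K' W : Lperp A W -> dual (img P K') W <-> dual K' W.
Proof.
move=> hW; split.
- by move=> h x kx; rewrite -(dotP HP) //; apply: h; exists x.
- by move=> h _ [x [kx ->]]; rewrite (dotP HP) //; apply: h.
Qed.

Lemma perp_img K' W : Lperp A W -> perp (img P K') W <-> perp K' W.
Proof.
move=> hW; split.
- by move=> h x kx; rewrite -(dotP HP) //; apply: h; exists x.
- by move=> h _ [x [kx ->]]; rewrite (dotP HP) //; apply: h.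
Qed.

Lemma last_img (ok : 'rV[R]_n -> Prop) vs : (forall W, ok W -> Lperp A W) ->
  forall K', fr_valid id ok K' vs -> fr_last id (img P K') vs = img P (fr_last id K' vs).
Proof.
move=> hok; elim: vs => [|W vs IH] K' //= [_ [_ [hW hv]]].
by rewrite -img_cut; [exact: IH | exact: hok].
Qed.

Lemma valid_equiv vs : forall K', is_face PK (img P K') -> img P K' (P C) ->
  (fr_valid id okN K' vs <-> fr_valid id okF (img P K') vs).
Proof.
elim: vs => [|W vs IH] K' hF hC //=.
split.
- move=> [hd [hp [[hL hWC] hv]]].
  have hd' : dual (img P K') W by rewrite dual_img.
  have hcut : is_face PK (cut (img P K') W) by apply: face_cut.
  have hCc : cut (img P K') W (P C) by split => //; rewrite (dotP HP).
  split => //; split; first by rewrite perp_img.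
  split.
    split => // x gx.
    have := min_face_sub hcut (S := fun y => y = P C) _ gx.
    by case => // y ->.
  by rewrite -img_cut // -IH // img_cut.
- move=> [hd [hp [[hL hWG] hv]]].
  have hWC : dot W C = 0 by rewrite -(dotP HP) //; apply: hWG; apply: G_PC.
  have hd' : dual (img P K') W := hd.
  have hcut : is_face PK (cut (img P K') W) by apply: face_cut.
  have hCc : cut (img P K') W (P C) by split => //; rewrite (dotP HP).
  split; first by rewrite -dual_img.
  split; first by rewrite -perp_img.
  split => //.
  by rewrite IH img_cut.
Qed.

Lemma sat vs : forall K', fr_valid id okN K' vs ->
  subset_of (fr_last id K' vs) K' /\
  (forall x z, K' x -> P x = P z -> fr_last id K' vs z -> fr_last id K' vs x).
Proof.
elim: vs => [|W vs IH] K' /=; first by move=> _; split => // x z kx.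
move=> [_ [_ [[hL _] hv]]]; have [h1 h2] := IH _ hv.
split; first by move=> x hx; exact: (proj1 (h1 x hx)).
move=> x z kx e hz; apply: (h2 x z) => //; split => //.
have [kz wz] : cut K' W z := h1 _ hz.
by rewrite -(dotP HP) // e (dotP HP).
Qed.

Lemma mf_char : seteq (min_face K Feas) (fun x => K x /\ G (P x)).
Proof.
have hGf : is_face PK G by apply: min_face_face; apply: PK_cone.
move=> x; split.
- move=> hx.
  have hF' : is_face K (fun y => K y /\ G (P y)).
    case: hGf => hGsub [[hG0 [hGD hGZ]] hGface].
    case: HK => hK0 [hKD hKZ].
    split; first by move=> y [].
    split; first split.
    * by split => //; rewrite (P0 HP).
    * split.
      - move=> a b [ka ga] [kb gb]; split; first exact: hKD.
        by rewrite (PD HP); apply: hGD.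
      - by move=> t a ht [ka ga]; split; [exact: hKZ | rewrite (PZ HP); apply: hGZ].
    * move=> a b ka kb [_ gab]; rewrite (PD HP) in gab.
      have [] := hGface _ _ (ex_intro _ a (conj ka erefl)) (ex_intro _ b (conj kb erefl)) gab.
      by move=> ga gb; split; split.
  have hS' : subset_of Feas (fun y => K y /\ G (P y)).
    by move=> Z hZ; split; [case: hZ | rewrite Feas_P //; apply: G_PC].
  exact: (min_face_sub hF' hS' hx).
- move=> [kx gx]; split => // F hF hS.
  have hT := face_T PK_cone PC_PK.
  have hST : subset_of (fun y => y = P C)
     (fun y => PK y /\ exists t, 0 <= t /\ PK (t *: P C - y)).
    move=> y ->; split; first exact: PC_PK.
    by exists 1; rewrite scale1r subrr; split => //; case: PK_cone.
  have [_ [t [ht [w [kw ew]]]]] := min_face_sub hT hST gx.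
  case: Hfeas => Z0 hZ0; have PZ0 := Feas_P hZ0; case: hZ0 => kZ0 _.
  have [hFK [[hF0 [hFD hFZ]] hFf]] := hF.
  have [hK0 [hKD hKZ]] := HK.
  have ht1 : 0 < t + 1 by rewrite ltr_wpDl.
  set s := (t + 1)^-1.
  have hs : 0 <= s by rewrite invr_ge0 ltW.
  have hsu : F (s *: x + s *: (w + Z0)).
    rewrite -scalerDr; apply: hS; split.
      exact: (hKZ _ _ hs (hKD _ _ kx (hKD _ _ kw kZ0))).
    have : P (s *: (x + (w + Z0))) = P C.
      rewrite (PZ HP) !(PD HP) -ew PZ0.
      have -> : P x + (t *: P C - P x + P C) = (t + 1) *: P C by mxring.
      by rewrite scalerA mulVf ?scale1r // gt_eqF.
    move/(Peq_inv HP) => [y' ey]; exists (- y'); rewrite mulNmx -ey; mxring.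
  have [fsx _] := hFf _ _ (hKZ _ _ hs kx) (hKZ _ _ hs (hKD _ _ kw kZ0)) hsu.
  have -> : x = (t + 1) *: (s *: x) by rewrite scalerA divff ?scale1r // gt_eqF.
  by apply: hFZ => //; apply: ltW.
Qed.

Lemma valid0 vs : fr_valid id okN K vs <-> fr_valid id okF PK vs.
Proof. exact: (valid_equiv vs (face_refl PK_cone) PC_PK). Qed.

Lemma key vs : fr_valid id okN K vs ->
  (seteq (fr_last id K vs) (min_face K Feas) <-> seteq (fr_last id PK vs) G).
Proof.
move=> hv; rewrite /PK (last_img (ok := okN)) //; last by move=> W [].
have [h1 h2] := sat hv.
set H := fr_last id K vs.
split => h y.
- split.
  + by move=> [z [hz ->]]; have /mf_char [] := (proj1 (h z) hz).
  + move=> gy; have [[x [kx ey]] _] : PK y /\ _ := gy.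
    subst y; exists x; split => //; apply/h/mf_char; split => //.
- split.
  + by move=> hy; apply/mf_char; split; [exact: h1 | apply/h; exists y].
  + move=> /mf_char [ky gy]; have [z [hz ez]] := proj2 (h (P y)) gy.
    exact: (h2 y z ky ez hz).
Qed.

Lemma part1 d : sd_null A K C d <-> sd_face A PK G d.
Proof.
rewrite /sd_null /sd_face /is_sing_deg -/okN -/Feas -/G.
split => [[[vs [hs [hv hl]]] hmin] | [[vs [hs [hv hl]]] hmin]].
- split.
  + exists vs; split => //; split; first by apply/valid0.
    by apply/key.
  + move=> ws hw hwl; have hw' : fr_valid id okN K ws by apply/valid0.
    by apply: hmin => //; apply/key.
- have hv' : fr_valid id okN K vs by apply/valid0.
  split.
  + by exists vs; split => //; split => //; apply/key.
  + move=> ws hw hwl; apply: hmin; first by apply/valid0.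
    by apply/(key hw).
Qed.

End Part1.

Section Part2.
Variables (R : realType) (n m k : nat) (A : 'M[R]_(n, m)) (M : 'M[R]_(n, k)) (C : 'rV[R]_n).
Hypothesis Hsurj : forall f : 'rV[R]_k, exists x, x *m M = f.
Hypothesis Hker : forall x, x *m M = 0 <-> Lsp A x.

Lemma Lperp_g v : Lperp A (v *m M^T).
Proof. by move=> x /Hker hx; rewrite dot_mul hx dot0r. Qed.

Lemma perp_range W : Lperp A W -> exists v, W = v *m M^T.
Proof.
move=> hW.
have hs j : exists x : 'rV[R]_n, x *m M == (delta_mx 0 j : 'rV[R]_k).
  by have [x hx] := Hsurj (delta_mx 0 j); exists x; rewrite hx.
pose N : 'M[R]_(k, n) := \matrix_(j < k) xchoose (hs j).
have NM : N *m M = 1%:M.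
  apply/row_matrixP => j; rewrite row_mul rowK row1.
  exact: (eqP (xchooseP (hs j))).
exists (W *m N^T).
set B : 'M[R]_n := 1%:M - M *m N.
have hB : forall x : 'rV[R]_n, dot (W *m B^T) x = 0.
  move=> x; rewrite dot_mul; apply: hW; apply/Hker.
  by rewrite /B mulmxBr mulmx1 mulmxBl -!mulmxA NM mulmx1 subrr.
have := dot_self0 (hB (W *m B^T)).
rewrite /B raddfB /= trmx1 trmx_mul mulmxBr mulmx1 mulmxA.
by move/eqP; rewrite subr_eq0 => /eqP.
Qed.

Lemma lift_seq ws : forall K', fr_valid id (fun W => Lperp A W /\ dot W C = 0) K' ws ->
  exists vs, ws = map (fun v => v *m M^T) vs.
Proof.
elim: ws => [|W ws IH] K' /=; first by exists [::].
move=> [_ [_ [[hL _] hv]]]; have [vs ->] := IH _ hv.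
by have [v ->] := perp_range hL; exists (v :: vs).
Qed.
End Part2.

Unset Implicit Arguments. Set Strict Implicit.

Theorem mainTheorem7 (R : realType) (n m : nat) (A : 'M[R]_(n, m))
  (K : 'rV[R]_n -> Prop) (C : 'rV[R]_n) (P : 'rV[R]_n -> 'rV[R]_n) :
  convex_cone K ->
  (exists Z, K Z /\ exists y : 'rV[R]_m, Z = C - y *m A^T) ->
  (* P is the orthogonal projection of E onto L^perp *)
  (forall x, Lperp A (P x) /\ Lsp A (x - P x)) ->
  (forall d, sd_null A K C d <-> sd_face A (img P K) (face_pt (P C) (img P K)) d) /\
  (forall (k : nat) (M : 'M[R]_(n, k)),
     (forall f : 'rV[R]_k, exists x, x *m M = f) ->
     (forall x, x *m M = 0 <-> Lsp A x) ->
     (* M induces an isomorphism of K/L (represented by P(K) in L^perp) onto M(K) *)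
     ((forall x, P x *m M = x *m M) /\
      (forall x y, Lperp A x -> Lperp A y -> x *m M = y *m M -> x = y) /\
      (forall f : 'rV[R]_k, exists x, Lperp A x /\ x *m M = f) /\
      seteq (img (fun x => x *m M) (img P K)) (img (fun x => x *m M) K)) /\
     (forall d, sd_face A (img P K) (face_pt (P C) (img P K)) d <->
                sd_sys M K (C *m M) d)).
Proof.
move=> HK Hfeas HP.
have P1 := part1 HK Hfeas HP.
split => // k M Hsurj Hker.
have PM x : P x *m M = x *m M.
  have /Hker : Lsp A (x - P x) by case: (HP x).
  by rewrite mulmxBl => /eqP; rewrite subr_eq0 => /eqP.
split.
  split => //.
  split.
    move=> x y hx hy e; apply/eqP; rewrite -subr_eq0; apply/eqP.
    apply: (LLperp0 (A:=A)); last exact: LperpB.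
    by apply/Hker; rewrite mulmxBl e subrr.
  split.
    move=> f; have [x0 hx0] := Hsurj f; exists (P x0); split; first by case: (HP x0).
    by rewrite PM.
  move=> y; split.
    by move=> [_ [[z [kz ->]] ->]]; exists z; split => //; rewrite PM.
  by move=> [z [kz ->]]; exists (P z); split; [exists z | rewrite PM].
move=> d; rewrite -P1.
have hT : (fun X => K X /\ X *m M = C *m M) =
          (fun Z => K Z /\ exists y : 'rV[R]_m, Z = C - y *m A^T).
  apply: predext => X; split => -[kX h]; split => //.
    have : Lsp A (X - C) by apply/Hker; rewrite mulmxBl h subrr.
    by move=> [y' ey]; exists (- y'); rewrite mulNmx -ey; mxring.
  by case: h => y ->; apply/eqP; rewrite -subr_eq0 -mulmxBl; apply/eqP/Hker;
     exists (- y); rewrite mulNmx; mxring.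
have hv vs : fr_valid (fun v => v *m M^T) (fun v => dot v (C *m M) = 0) K vs <->
             fr_valid id (fun W => Lperp A W /\ dot W C = 0) K (map (fun v => v *m M^T) vs).
  apply: fr_valid_map => v; split; first by move=> h; split; [exact: Lperp_g | rewrite dot_mul].
  by case=> _; rewrite dot_mul.
rewrite /sd_sys /sd_null /is_sing_deg hT.
split => [[[ws [hs [hw hl]]] hmin] | [[vs [hs [hvs hl]]] hmin]].
- have [vs ews] := lift_seq Hsurj Hker hw; subst ws.
  split.
  + exists vs; rewrite size_map in hs; split => //; split; first by apply/hv.
    by rewrite fr_last_map.
  + move=> vs' hv' hl'; rewrite -(size_map (fun v => v *m M^T)); apply: hmin.
      by apply/hv.
    by rewrite -fr_last_map.
- split.
  + exists (map (fun v => v *m M^T) vs); rewrite size_map; split => //; split.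
      by apply/hv.
    by rewrite -fr_last_map.
  + move=> ws hw hl'; have [vs' ews] := lift_seq Hsurj Hker hw; subst ws.
    rewrite size_map; apply: hmin; first by apply/hv.
    by rewrite fr_last_map.
Qed.
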